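(* Let $\beta$ be a constant, $K$ a smooth positive function, $C(u)=\beta K(u)$, and $J(u)=\int K(u)\,du$ an antiderivative of $K$. Then the equation $C(u)u_t=z^{-2}\left(K(u)z^{2}u_z\right)_z$ ($z>0$) admits the Lie point symmetry generators $$\widehat Y_1=tz\partial_z+t^2\partial_t-\left(\frac{\beta}{4}z^2+\frac{3}{2}t\right)\frac{J(u)}{K(u)}\partial_u,\quad \widehat Y_2=\frac{z}{2}\partial_z+t\partial_t,\quad \widehat Y_3=\partial_t,$$ $$\widehat Y_4=t\partial_z-\left(\frac{\beta}{2}z+\frac{t}{z}\right)\frac{J(u)}{K(u)}\partial_u,\quad \widehat Y_5=\partial_z-\frac{1}{z}\frac{J(u)}{K(u)}\partial_u,\quad \widehat Y_6=-\frac{J(u)}{K(u)}\partial_u .$$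
   Context: Here $u=u(z,t)$. A vector field $Y=\xi\partial_z+\tau\partial_t+\eta\partial_u$ (coefficients depending on $z,t,u$) is an admitted Lie point symmetry generator of the equation if its second prolongation annihilates $C(u)u_t-K'(u)u_z^2-K(u)u_{zz}-\frac{2}{z}K(u)u_z$ on the solution manifold of the equation (equivalently, the one-parameter local group it generates maps solutions to solutions). *)

(* Defs.v *)
From Stdlib Require Import Reals.
From Coquelicot Require Import Coquelicot.
Open Scope R_scope.

(* A scalar second-order PDE in two independent variables (z,t) and one
   dependent variable u, given as a function on the second jet space with
   coordinates (z, t, u, u_z, u_t, u_zz, u_zt, u_tt). *)
Definition PDE2 := R -> R -> R -> R -> R -> R -> R -> R -> R.

(* A vector field  xi d_z + tau d_t + eta d_u  with coefficients in (z,t,u). *)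
Record vfield := VField {
  xi  : R -> R -> R -> R;
  tau : R -> R -> R -> R;
  eta : R -> R -> R -> R }.

Definition Dz0 (F : R -> R -> R -> R) z t u uz :=
  Derive (fun a => F a t u) z + uz * Derive (fun b => F z t b) u.
Definition Dt0 (F : R -> R -> R -> R) z t u ut :=
  Derive (fun a => F z a u) t + ut * Derive (fun b => F z t b) u.

Definition Dz1 (G : R -> R -> R -> R -> R -> R) z t u uz ut uzz uzt :=
  Derive (fun a => G a t u uz ut) z + uz * Derive (fun b => G z t b uz ut) u
  + uzz * Derive (fun c => G z t u c ut) uz + uzt * Derive (fun d => G z t u uz d) ut.
Definition Dt1 (G : R -> R -> R -> R -> R -> R) z t u uz ut uzt utt :=
  Derive (fun a => G z a u uz ut) t + ut * Derive (fun b => G z t b uz ut) u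
  + uzt * Derive (fun c => G z t u c ut) uz + utt * Derive (fun d => G z t u uz d) ut.

Definition eta_z (Y : vfield) z t u uz ut :=
  Dz0 (eta Y) z t u uz - uz * Dz0 (xi Y) z t u uz - ut * Dz0 (tau Y) z t u uz.
Definition eta_t (Y : vfield) z t u uz ut :=
  Dt0 (eta Y) z t u ut - uz * Dt0 (xi Y) z t u ut - ut * Dt0 (tau Y) z t u ut.
Definition eta_zz (Y : vfield) z t u uz ut uzz uzt :=
  Dz1 (eta_z Y) z t u uz ut uzz uzt
  - uzz * Dz0 (xi Y) z t u uz - uzt * Dz0 (tau Y) z t u uz.
Definition eta_zt (Y : vfield) z t u uz ut uzz uzt utt :=
  Dt1 (eta_z Y) z t u uz ut uzt utt
  - uzz * Dt0 (xi Y) z t u ut - uzt * Dt0 (tau Y) z t u ut.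
Definition eta_tt (Y : vfield) z t u uz ut uzt utt :=
  Dt1 (eta_t Y) z t u uz ut uzt utt
  - uzt * Dt0 (xi Y) z t u ut - utt * Dt0 (tau Y) z t u ut.

Definition prolong2 (Y : vfield) (Delta : PDE2) z t u uz ut uzz uzt utt :=
    xi Y z t u  * Derive (fun x => Delta x t u uz ut uzz uzt utt) z
  + tau Y z t u * Derive (fun x => Delta z x u uz ut uzz uzt utt) t
  + eta Y z t u * Derive (fun x => Delta z t x uz ut uzz uzt utt) u
  + eta_z Y z t u uz ut * Derive (fun x => Delta z t u x ut uzz uzt utt) uz
  + eta_t Y z t u uz ut * Derive (fun x => Delta z t u uz x uzz uzt utt) ut
  + eta_zz Y z t u uz ut uzz uzt * Derive (fun x => Delta z t u uz ut x uzt utt) uzz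
  + eta_zt Y z t u uz ut uzz uzt utt * Derive (fun x => Delta z t u uz ut uzz x utt) uzt
  + eta_tt Y z t u uz ut uzt utt * Derive (fun x => Delta z t u uz ut uzz uzt x) utt.

Definition is_lie_symmetry (Delta : PDE2) (Y : vfield) : Prop :=
  forall z t u uz ut uzz uzt utt, 0 < z ->
    Delta z t u uz ut uzz uzt utt = 0 ->
    prolong2 Y Delta z t u uz ut uzz uzt utt = 0.

(* The equation C(u)u_t - K'(u)u_z^2 - K(u)u_zz - (2/z)K(u)u_z = 0,
   i.e. C(u) u_t = z^{-2} (K(u) z^2 u_z)_z. *)
Definition radial_eq (C K : R -> R) : PDE2 :=
  fun z t u uz ut uzz uzt utt =>
    C u * ut - Derive K u * uz ^ 2 - K u * uzz - 2 / z * K u * uz.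

Definition Y1 (beta : R) (K J : R -> R) : vfield :=
  VField (fun z t u => t * z) (fun z t u => t ^ 2)
         (fun z t u => - (beta / 4 * z ^ 2 + 3 / 2 * t) * (J u / K u)).
Definition Y2 : vfield :=
  VField (fun z t u => z / 2) (fun z t u => t) (fun z t u => 0).
Definition Y3 : vfield :=
  VField (fun z t u => 0) (fun z t u => 1) (fun z t u => 0).
Definition Y4 (beta : R) (K J : R -> R) : vfield :=
  VField (fun z t u => t) (fun z t u => 0)
         (fun z t u => - (beta / 2 * z + t / z) * (J u / K u)).
Definition Y5 (K J : R -> R) : vfield :=
  VField (fun z t u => 1) (fun z t u => 0) (fun z t u => - (1 / z) * (J u / K u)).
Definition Y6 (K J : R -> R) : vfield :=
  VField (fun z t u => 0) (fun z t u => 0) (fun z t u => - (J u / K u)).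

(* Main.v *)
Require Import Defs.
From Stdlib Require Import Reals Lra FunctionalExtensionality.
From Coquelicot Require Import Coquelicot.
Open Scope R_scope.

Lemma locally_pos (z : R) : 0 < z -> locally z (fun a => 0 < a).
Proof.
  intros Hz. exists (mkposreal z Hz). intros y Hy.
  unfold ball in Hy; simpl in Hy; unfold AbsRing_ball, abs, minus, plus, opp in Hy; simpl in Hy.
  apply Rabs_lt_between in Hy. lra.
Qed.

Ltac sc := repeat match goal with |- _ /\ _ => split | |- True => exact I end;
     try (eexists; eauto; fail); try (now auto); try (apply Rgt_not_eq; assumption).
Ltac rwa Hz := repeat first [ rewrite Derive_const
  | match goal with H : forall a b, 0 < a -> Derive _ _ = _ |- _ => rewrite (H _ _ Hz) end
  | match goal with H : forall a, Derive _ _ = _ |- _ => rewrite H end ].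
Ltac dtac Hz := try symmetry; apply is_derive_unique; auto_derive; [sc | rwa Hz; try ring].

Lemma generic (C K : R -> R) (g g1 g2 : R -> R)
  (X T A Xz Xt Xzz Tz Tt Tzz Az At Azz : R -> R -> R)
  (HC : forall x, ex_derive C x) (HK : forall x, ex_derive K x)
  (HK1 : forall x, ex_derive (Derive K) x)
  (Hg : forall u, is_derive g u (g1 u)) (Hg1 : forall u, is_derive g1 u (g2 u))
  (HXz : forall z t, 0 < z -> is_derive (fun a => X a t) z (Xz z t))
  (HXt : forall z t, 0 < z -> is_derive (fun b => X z b) t (Xt z t))
  (HXzz : forall z t, 0 < z -> is_derive (fun a => Xz a t) z (Xzz z t))
  (HTz : forall z t, 0 < z -> is_derive (fun a => T a t) z (Tz z t))
  (HTt : forall z t, 0 < z -> is_derive (fun b => T z b) t (Tt z t))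
  (HTzz : forall z t, 0 < z -> is_derive (fun a => Tz a t) z (Tzz z t))
  (HAz : forall z t, 0 < z -> is_derive (fun a => A a t) z (Az z t))
  (HAt : forall z t, 0 < z -> is_derive (fun b => A z b) t (At z t))
  (HAzz : forall z t, 0 < z -> is_derive (fun a => Az a t) z (Azz z t))
  z t u uz ut uzz uzt utt (Hz : 0 < z) :
  prolong2 (VField (fun z t u => X z t) (fun z t u => T z t) (fun z t u => A z t * g u))
    (radial_eq C K) z t u uz ut uzz uzt utt =
  X z t * (2 / z ^ 2 * K u * uz)
  + A z t * g u * (Derive C u * ut - Derive (Derive K) u * uz ^ 2 - Derive K u * uzz - 2 / z * Derive K u * uz)
  + (Az z t * g u + uz * A z t * g1 u - uz * Xz z t - ut * Tz z t) * (- (2 * Derive K u * uz) - 2 / z * K u)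
  + (At z t * g u + ut * A z t * g1 u - uz * Xt z t - ut * Tt z t) * C u
  + ((Azz z t * g u + uz * Az z t * g1 u - uz * Xzz z t - ut * Tzz z t)
     + uz * (Az z t * g1 u + uz * A z t * g2 u) + uzz * (A z t * g1 u - Xz z t)
     + uzt * (- Tz z t) - uzz * Xz z t - uzt * Tz z t) * (- K u).
Proof.
  set (Y := VField _ _ _).
  pose proof (fun z t H => is_derive_unique _ _ _ (HXz z t H)) as DXz.
  pose proof (fun z t H => is_derive_unique _ _ _ (HXt z t H)) as DXt.
  pose proof (fun z t H => is_derive_unique _ _ _ (HXzz z t H)) as DXzz.
  pose proof (fun z t H => is_derive_unique _ _ _ (HTz z t H)) as DTz.
  pose proof (fun z t H => is_derive_unique _ _ _ (HTt z t H)) as DTt.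
  pose proof (fun z t H => is_derive_unique _ _ _ (HTzz z t H)) as DTzz.
  pose proof (fun z t H => is_derive_unique _ _ _ (HAz z t H)) as DAz.
  pose proof (fun z t H => is_derive_unique _ _ _ (HAt z t H)) as DAt.
  pose proof (fun z t H => is_derive_unique _ _ _ (HAzz z t H)) as DAzz.
  pose proof (fun u => is_derive_unique _ _ _ (Hg u)) as Dg.
  pose proof (fun u => is_derive_unique _ _ _ (Hg1 u)) as Dg1.
  assert (Ez : forall z t u uz ut, 0 < z -> eta_z Y z t u uz ut =
     Az z t * g u + uz * A z t * g1 u - uz * Xz z t - ut * Tz z t).
  { clear z t u uz ut uzz uzt utt Hz. intros z t u uz ut Hz.
    unfold eta_z, Dz0; simpl.
    replace (Derive (fun a => A a t * g u) z) with (Az z t * g u) by dtac Hz.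
    replace (Derive (fun b => A z t * g b) u) with (A z t * g1 u) by dtac Hz.
    rwa Hz. ring. }
  assert (Et : forall z t u uz ut, 0 < z -> eta_t Y z t u uz ut =
     At z t * g u + ut * A z t * g1 u - uz * Xt z t - ut * Tt z t).
  { clear z t u uz ut uzz uzt utt Hz Ez. intros z t u uz ut Hz.
    unfold eta_t, Dt0; simpl.
    replace (Derive (fun a => A z a * g u) t) with (At z t * g u) by dtac Hz.
    replace (Derive (fun b => A z t * g b) u) with (A z t * g1 u) by dtac Hz.
    rwa Hz. ring. }
  unfold prolong2, eta_zz, Dz1.
  rewrite (Ez z t u uz ut Hz), (Et z t u uz ut Hz).
  replace (Derive (fun a => eta_z Y a t u uz ut) z)
    with (Azz z t * g u + uz * Az z t * g1 u - uz * Xzz z t - ut * Tzz z t).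
  2:{ rewrite (Derive_ext_loc (fun a => eta_z Y a t u uz ut)
     (fun a => Az a t * g u + uz * A a t * g1 u - uz * Xz a t - ut * Tz a t)).
     2:{ generalize (locally_pos z Hz). apply filter_imp. intros a Ha. apply Ez; exact Ha. }
     dtac Hz. }
  replace (Derive (fun b => eta_z Y z t b uz ut) u) with (Az z t * g1 u + uz * A z t * g2 u).
  2:{ rewrite (Derive_ext (fun b => eta_z Y z t b uz ut)
     (fun b => Az z t * g b + uz * A z t * g1 b - uz * Xz z t - ut * Tz z t)) by (intros; apply Ez; exact Hz).
     dtac Hz. }
  replace (Derive (fun c => eta_z Y z t u c ut) uz) with (A z t * g1 u - Xz z t).
  2:{ rewrite (Derive_ext (fun c => eta_z Y z t u c ut)
     (fun c => Az z t * g u + c * A z t * g1 u - c * Xz z t - ut * Tz z t)) by (intros; apply Ez; exact Hz).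
     dtac Hz. }
  replace (Derive (fun d => eta_z Y z t u uz d) ut) with (- Tz z t).
  2:{ rewrite (Derive_ext (fun d => eta_z Y z t u uz d)
     (fun d => Az z t * g u + uz * A z t * g1 u - uz * Xz z t - d * Tz z t)) by (intros; apply Ez; exact Hz).
     dtac Hz. }
  unfold Dz0, radial_eq; cbv beta.
  replace (Derive (fun x => C u * ut - Derive K u * uz ^ 2 - K u * uzz - 2 / x * K u * uz) z)
    with (2 / z ^ 2 * K u * uz) by (dtac Hz; field; lra).
  replace (Derive (fun x => C u * ut - Derive K u * uz ^ 2 - K u * uzz - 2 / z * K u * uz) t)
    with 0 by dtac Hz.
  replace (Derive (fun x => C x * ut - Derive K x * uz ^ 2 - K x * uzz - 2 / z * K x * uz) u)
    with (Derive C u * ut - Derive (Derive K) u * uz ^ 2 - Derive K u * uzz - 2 / z * Derive K u * uz) by (symmetry; apply is_derive_unique; auto_derive; [sc | idtac]; change (fun x:R => C x) with C; change (fun x:R => K x) with K; change (fun x : R => Derive K x) with (Derive K); ring).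
  replace (Derive (fun x => C u * ut - Derive K u * x ^ 2 - K u * uzz - 2 / z * K u * x) uz)
    with (- (2 * Derive K u * uz) - 2 / z * K u) by dtac Hz.
  replace (Derive (fun x => C u * x - Derive K u * uz ^ 2 - K u * uzz - 2 / z * K u * uz) ut)
    with (C u) by dtac Hz.
  replace (Derive (fun x => C u * ut - Derive K u * uz ^ 2 - K u * x - 2 / z * K u * uz) uzz)
    with (- K u) by dtac Hz.
  replace (Derive (fun x => C u * ut - Derive K u * uz ^ 2 - K u * uzz - 2 / z * K u * uz) uzt)
    with 0 by dtac Hz.
  replace (Derive (fun x => C u * ut - Derive K u * uz ^ 2 - K u * uzz - 2 / z * K u * uz) utt)
    with 0 by dtac Hz.
  unfold Y; cbn [xi tau eta]; cbv beta. rwa Hz. ring.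
Qed.

Ltac dh := let Hz' := fresh in intros ? ? Hz'; auto_derive;
  repeat split; try (apply Rgt_not_eq; exact Hz'); try field;
  repeat apply Rmult_integral_contrapositive_currified; try (apply Rgt_not_eq; exact Hz'); try apply R1_neq_R0.

Theorem mainTheorem5 (beta : R) (K C J : R -> R)
  (K_smooth : forall n x, ex_derive_n K n x)
  (K_pos : forall x, 0 < K x)
  (C_def : forall x, C x = beta * K x)
  (J_antider : forall x, is_derive J x (K x)) :
  is_lie_symmetry (radial_eq C K) (Y1 beta K J) /\
  is_lie_symmetry (radial_eq C K) Y2 /\
  is_lie_symmetry (radial_eq C K) Y3 /\
  is_lie_symmetry (radial_eq C K) (Y4 beta K J) /\
  is_lie_symmetry (radial_eq C K) (Y5 K J) /\
  is_lie_symmetry (radial_eq C K) (Y6 K J).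
Proof.
  assert (HK : forall x, ex_derive K x) by (intro x; exact (K_smooth 1%nat x)).
  assert (HK1 : forall x, ex_derive (Derive K) x) by (intro x; exact (K_smooth 2%nat x)).
  assert (HC : forall x, ex_derive C x).
  { intro x. apply (ex_derive_ext (fun y => beta * K y)); [intros; symmetry; apply C_def|].
    apply ex_derive_scal, HK. }
  assert (DC : forall x, Derive C x = beta * Derive K x).
  { intro x. rewrite (Derive_ext C (fun y => beta * K y)) by apply C_def.
    apply Derive_scal. }
  assert (DJ : forall x, Derive J x = K x) by (intro; apply is_derive_unique, J_antider).
  assert (HJ : forall x, ex_derive J x) by (intro x; eexists; apply J_antider).
  assert (Knz : forall x, K x <> 0) by (intro x; apply Rgt_not_eq, K_pos).
  set (g := fun u => J u / K u).
  set (g1 := fun u => (K u * K u - J u * Derive K u) / K u ^ 2).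
  set (g2 := fun u => ((Derive K u * K u + K u * Derive K u - (K u * Derive K u + J u * Derive (Derive K) u)) * K u ^ 2
                       - (K u * K u - J u * Derive K u) * (2 * K u * Derive K u)) / (K u ^ 2) ^ 2).
  assert (Hg : forall u, is_derive g u (g1 u)).
  { intro u. unfold g, g1. auto_derive.
    - repeat split; auto.
    - change (fun x => J x) with J. change (fun x => K x) with K. rewrite DJ. field. auto. }
  assert (Hg1 : forall u, is_derive g1 u (g2 u)).
  { intro u. unfold g1, g2. auto_derive.
    - repeat split; auto.
    - change (fun x => J x) with J. change (fun x => K x) with K.
      change (fun x => Derive K x) with (Derive K). rewrite DJ. field. auto. }
  assert (Fin : forall z t u uz ut uzz uzt utt (Hz : 0 < z), radial_eq C K z t u uz ut uzz uzt utt = 0 ->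
     uzz = (C u * ut - Derive K u * uz ^ 2 - 2 / z * K u * uz) / K u).
  { intros z t u uz ut uzz uzt utt Hz HD.
    apply (Rmult_eq_reg_l (K u)); [| apply Knz].
    transitivity (K u * uzz + radial_eq C K z t u uz ut uzz uzt utt); [rewrite HD; ring|].
    unfold radial_eq. field. split; [apply Rgt_not_eq; exact Hz | apply Knz]. }
  split; [| split; [| split; [| split; [| split]]]].
  - intros z t u uz ut uzz uzt utt Hz HD.
    pose proof (Fin z t u uz ut uzz uzt utt Hz HD) as Hu. clear HD.
    eapply eq_trans.
    { apply (generic C K g g1 g2 (fun z t => t * z) (fun z t => t ^ 2) (fun z t => - (beta / 4 * z ^ 2 + 3 / 2 * t))
        (fun z t => t) (fun z t => z) (fun z t => 0) (fun z t => 0) (fun z t => 2 * t) (fun z t => 0)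
        (fun z t => - (beta / 2 * z)) (fun z t => - (3/2)) (fun z t => - (beta / 2))); try assumption; dh. }
    cbv beta. unfold g, g1, g2. subst uzz. rewrite DC, !C_def. field; repeat split; try apply Knz; try (apply Rgt_not_eq; exact Hz).
  - replace Y2 with (VField (fun z t u => z / 2) (fun z t u => t) (fun z t u => 0 * g u)) by (unfold Y2; f_equal; extensionality z; extensionality t; extensionality u; unfold g; ring).
    intros z t u uz ut uzz uzt utt Hz HD.
    pose proof (Fin z t u uz ut uzz uzt utt Hz HD) as Hu. clear HD.
    eapply eq_trans.
    { apply (generic C K g g1 g2 (fun z t => z / 2) (fun z t => t) (fun z t => 0)
        (fun z t => 1/2) (fun z t => 0) (fun z t => 0) (fun z t => 0) (fun z t => 1) (fun z t => 0)
        (fun z t => 0) (fun z t => 0) (fun z t => 0)); try assumption; dh. }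
    cbv beta. unfold g, g1, g2. subst uzz. rewrite DC, !C_def. field; repeat split; try apply Knz; try (apply Rgt_not_eq; exact Hz).
  - replace Y3 with (VField (fun z t u => 0) (fun z t u => 1) (fun z t u => 0 * g u)) by (unfold Y3; f_equal; extensionality z; extensionality t; extensionality u; unfold g; ring).
    intros z t u uz ut uzz uzt utt Hz HD.
    pose proof (Fin z t u uz ut uzz uzt utt Hz HD) as Hu. clear HD.
    eapply eq_trans.
    { apply (generic C K g g1 g2 (fun z t => 0) (fun z t => 1) (fun z t => 0)
        (fun z t => 0) (fun z t => 0) (fun z t => 0) (fun z t => 0) (fun z t => 0) (fun z t => 0)
        (fun z t => 0) (fun z t => 0) (fun z t => 0)); try assumption; dh. }
    cbv beta. unfold g, g1, g2. subst uzz. rewrite DC, !C_def. field; repeat split; try apply Knz; try (apply Rgt_not_eq; exact Hz).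
  - intros z t u uz ut uzz uzt utt Hz HD.
    pose proof (Fin z t u uz ut uzz uzt utt Hz HD) as Hu. clear HD.
    eapply eq_trans.
    { apply (generic C K g g1 g2 (fun z t => t) (fun z t => 0) (fun z t => - (beta / 2 * z + t / z))
        (fun z t => 0) (fun z t => 1) (fun z t => 0) (fun z t => 0) (fun z t => 0) (fun z t => 0)
        (fun z t => - (beta / 2 - t / z ^ 2)) (fun z t => - (1 / z)) (fun z t => - (2 * t / z ^ 3))); try assumption; dh. }
    cbv beta. unfold g, g1, g2. subst uzz. rewrite DC, !C_def. field; repeat split; try apply Knz; try (apply Rgt_not_eq; exact Hz).
  - intros z t u uz ut uzz uzt utt Hz HD.
    pose proof (Fin z t u uz ut uzz uzt utt Hz HD) as Hu. clear HD.
    eapply eq_trans.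
    { apply (generic C K g g1 g2 (fun z t => 1) (fun z t => 0) (fun z t => - (1 / z))
        (fun z t => 0) (fun z t => 0) (fun z t => 0) (fun z t => 0) (fun z t => 0) (fun z t => 0)
        (fun z t => 1 / z ^ 2) (fun z t => 0) (fun z t => - (2 / z ^ 3))); try assumption; dh. }
    cbv beta. unfold g, g1, g2. subst uzz. rewrite DC, !C_def. field; repeat split; try apply Knz; try (apply Rgt_not_eq; exact Hz).
  - replace (Y6 K J) with (VField (fun z t u => 0) (fun z t u => 0) (fun z t u => -1 * g u)) by (unfold Y6; f_equal; extensionality z; extensionality t; extensionality u; unfold g; ring).
    intros z t u uz ut uzz uzt utt Hz HD.
    pose proof (Fin z t u uz ut uzz uzt utt Hz HD) as Hu. clear HD.
    eapply eq_trans.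
    { apply (generic C K g g1 g2 (fun z t => 0) (fun z t => 0) (fun z t => -1)
        (fun z t => 0) (fun z t => 0) (fun z t => 0) (fun z t => 0) (fun z t => 0) (fun z t => 0)
        (fun z t => 0) (fun z t => 0) (fun z t => 0)); try assumption; dh. }
    cbv beta. unfold g, g1, g2. subst uzz. rewrite DC, !C_def. field; repeat split; try apply Knz; try (apply Rgt_not_eq; exact Hz).
Qed.
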